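(* Consider CAV $i$ and its immediately preceding CAV $i_p$ on the same road, in the setting of the context, under assumptions (A1), (SA) and (A3). Suppose that at each sampling time the control applied on $[t,t+\Delta t)$ is a feasible point of QP$_1(t)$ whenever QP$_1(t)$ is feasible. Then QP$_1(t_i^0+k\Delta t)$ is feasible for every integer $k\ge 0$ with $[t_i^0+k\Delta t,\,t_i^0+(k+1)\Delta t]\subset[t_i^0,t_i^m]$.
   Context: **Vehicle model and times.** The vehicle dynamics are $\dot x_i=v_i$ and $\dot v_i=u_i$, where $x_i$ is the position, $v_i$ the speed and $u_i$ the acceleration (the control). CAV $i$ enters the control zone at time $t_i^0$ and reaches the merging point at time $t_i^m$. The preceding CAV $i_p$ has position $x_{i_p}$, speed $v_{i_p}$ and acceleration $u_{i_p}$, which are known to CAV $i$. Let $z_{i,i_p}=x_{i_p}-x_i$, and let $\varphi>0$, $\delta$ and $k_1>0$ be constants. **Control bounds.** Control bounds are $u_{\min}\le u_i\le u_{i,\max}$ with $u_{\min}<0<u_{i,\max}$. **(A1) Common minimum acceleration.** Every CAV has the same minimum acceleration $u_{\min}$. In particular $u_{i_p}(t)\ge u_{\min}$ for all $t$. **Functions of time:** - Safety function: $b_1=z_{i,i_p}-\varphi v_i-\delta$. - CBF constraint: $b_{\mathrm{cbf}_1}(u_i)=v_{i_p}-v_i-\varphi u_i+k_1 b_1\ge 0$. - Feasibility function: $b_F=v_{i_p}-v_i+k_1b_1-\varphi u_{\min}$. - Auxiliary function: $b_{\eta_1}=v_{i_p}-v_i-\varphi u_{\min}$. - Feasibility constraint: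 $\eta_1(u_i)=u_{i_p}-u_i+k_1 b_{\eta_1}\ge 0$. Note that $\eta_1=\dot b_{\eta_1}+k_1b_{\eta_1}$ and $\dot b_F+k_1 b_F=\eta_1+k_1 b_{\mathrm{cbf}_1}$. **QP$_1(t)$.** QP$_1(t)$ is the quadratic program in the variables $(u_i,e_i)$ that minimizes $\beta e_i^2+\tfrac12(u_i-u_{\mathrm{ref}}(t))^2$ subject to: - $b_{\mathrm{cbf}_1}(u_i)\ge0$, - $u_{\min}\le u_i\le u_{i,\max}$, - $\eta_1(u_i)\ge0$, - a control Lyapunov constraint $c_1(t)+c_2(t)u_i\le e_i$ with a free slack variable $e_i$. All quantities are evaluated at time $t$. ''Feasible'' means the constraint set is nonempty. **(SA) Sampling / forward invariance.** The control is held constant on each $[t,t+\Delta t)$, and $\Delta t$ is small enough that for each $b\in\{b_1,b_F,b_{\eta_1}\}$: if $b(t)\ge0$ and $\dot b(t)+k_1b(t)\ge0$ under the applied controls, then $b(t+\Delta t)\ge0$. **(A3) Initial conditions.** $b_1(t_i^0)\ge0$, $b_F(t_i^0)\ge0$ and $b_{\eta_1}(t_i^0)\ge 0$. *)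

(* Defs.v *)
From Stdlib Require Import Reals.
From Coquelicot Require Import Coquelicot.
Open Scope R_scope.

(* Time derivative "under the applied controls": the control is held constant
   on [t, t+dt), so the relevant derivative at a sampling time t is the
   right derivative. *)
Definition right_deriv (f : R -> R) (t l : R) : Prop :=
  filterlim (fun h => (f (t + h) - f t) / h) (at_right 0) (locally l).

Definition b1 (phi delta : R) (x_i v_i x_ip : R -> R) (t : R) : R :=
  (x_ip t - x_i t) - phi * v_i t - delta.

Definition bcbf1 (phi delta k1 : R) (x_i v_i x_ip v_ip : R -> R) (t u : R) : R :=
  v_ip t - v_i t - phi * u + k1 * b1 phi delta x_i v_i x_ip t.

Definition bF (phi delta k1 umin : R) (x_i v_i x_ip v_ip : R -> R) (t : R) : R :=
  v_ip t - v_i t + k1 * b1 phi delta x_i v_i x_ip t - phi * umin.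

Definition b_eta1 (phi umin : R) (v_i v_ip : R -> R) (t : R) : R :=
  v_ip t - v_i t - phi * umin.

Definition eta1 (phi k1 umin : R) (v_i v_ip u_ip : R -> R) (t u : R) : R :=
  u_ip t - u + k1 * b_eta1 phi umin v_i v_ip t.

(* Constraint set of QP_1(t) in the variables (u, e). The objective
   beta e^2 + 1/2 (u - u_ref)^2 plays no role in feasibility. *)
Definition QP1_constraints (phi delta k1 umin umax : R)
    (x_i v_i x_ip v_ip u_ip c1 c2 : R -> R) (t u e : R) : Prop :=
  0 <= bcbf1 phi delta k1 x_i v_i x_ip v_ip t u /\
  umin <= u <= umax /\
  0 <= eta1 phi k1 umin v_i v_ip u_ip t u /\
  c1 t + c2 t * u <= e.

Definition QP1_feasible (phi delta k1 umin umax : R)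
    (x_i v_i x_ip v_ip u_ip c1 c2 : R -> R) (t : R) : Prop :=
  exists u e, QP1_constraints phi delta k1 umin umax x_i v_i x_ip v_ip u_ip c1 c2 t u e.

(* Main.v *)
Require Import Defs.
From Stdlib Require Import Reals.
From Coquelicot Require Import Coquelicot.
Open Scope R_scope.
From Stdlib Require Import Lra.

Lemma rd_plus f g t a b : right_deriv f t a -> right_deriv g t b ->
  right_deriv (fun s => f s + g s) t (a + b).
Proof.
  unfold right_deriv; intros Ha Hb.
  eapply filterlim_ext.
  2: { eapply filterlim_comp_2; [exact Ha | exact Hb | apply (@filterlim_plus _ R_NormedModule)]. }
  intros h; simpl. change plus with Rplus. unfold Rdiv; ring.
Qed.

Lemma rd_scal f t a c : right_deriv f t a -> right_deriv (fun s => c * f s) t (c * a).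
Proof.
  unfold right_deriv; intros Ha.
  eapply filterlim_ext.
  2: { eapply filterlim_comp; [exact Ha | apply (@filterlim_scal_r _ R_NormedModule c)]. }
  intros h; simpl. change scal with Rmult. unfold Rdiv; ring.
Qed.

Lemma rd_const t c : right_deriv (fun _ => c) t 0.
Proof.
  unfold right_deriv.
  eapply filterlim_ext. 2: apply filterlim_const.
  intros h; simpl. unfold Rdiv; ring.
Qed.

Lemma rd_ext f g t a : (forall s, f s = g s) -> right_deriv f t a -> right_deriv g t a.
Proof.
  unfold right_deriv; intros E H. eapply filterlim_ext. 2: exact H.
  intros h; simpl; rewrite !E; reflexivity.
Qed.

Theorem theorem2
  (phi delta k1 umin umax dt t0 tm : R)
  (x_i v_i u_i x_ip v_ip u_ip c1 c2 : R -> R)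
  (Hphi : 0 < phi) (Hk1 : 0 < k1) (Humin : umin < 0) (Humax : 0 < umax)
  (Hdt : 0 < dt)
  (* vehicle dynamics of CAV i and of its predecessor ip *)
  (Hdx_i : forall t, right_deriv x_i t (v_i t))
  (Hdv_i : forall t, right_deriv v_i t (u_i t))
  (Hdx_ip : forall t, right_deriv x_ip t (v_ip t))
  (Hdv_ip : forall t, right_deriv v_ip t (u_ip t))
  (* (A1) common minimum acceleration *)
  (HA1 : forall t, umin <= u_ip t)
  (* the control is held constant on each sampling interval *)
  (Hhold : forall (k : nat) s, t0 + INR k * dt <= s < t0 + INR k * dt + dt ->
                               u_i s = u_i (t0 + INR k * dt))
  (* (SA) sampling / forward invariance, for b in {b1, bF, b_eta1} *)
  (HSA_b1 : forall (k : nat) d,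
      let t := t0 + INR k * dt in
      right_deriv (b1 phi delta x_i v_i x_ip) t d ->
      0 <= b1 phi delta x_i v_i x_ip t ->
      0 <= d + k1 * b1 phi delta x_i v_i x_ip t ->
      0 <= b1 phi delta x_i v_i x_ip (t + dt))
  (HSA_bF : forall (k : nat) d,
      let t := t0 + INR k * dt in
      right_deriv (bF phi delta k1 umin x_i v_i x_ip v_ip) t d ->
      0 <= bF phi delta k1 umin x_i v_i x_ip v_ip t ->
      0 <= d + k1 * bF phi delta k1 umin x_i v_i x_ip v_ip t ->
      0 <= bF phi delta k1 umin x_i v_i x_ip v_ip (t + dt))
  (HSA_beta : forall (k : nat) d,
      let t := t0 + INR k * dt in
      right_deriv (b_eta1 phi umin v_i v_ip) t d ->
      0 <= b_eta1 phi umin v_i v_ip t ->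
      0 <= d + k1 * b_eta1 phi umin v_i v_ip t ->
      0 <= b_eta1 phi umin v_i v_ip (t + dt))
  (* (A3) initial conditions *)
  (HA3_b1 : 0 <= b1 phi delta x_i v_i x_ip t0)
  (HA3_bF : 0 <= bF phi delta k1 umin x_i v_i x_ip v_ip t0)
  (HA3_beta : 0 <= b_eta1 phi umin v_i v_ip t0)
  (* the applied control is a feasible point of QP1(t) whenever QP1(t) is feasible *)
  (Hctrl : forall (k : nat),
      let t := t0 + INR k * dt in
      QP1_feasible phi delta k1 umin umax x_i v_i x_ip v_ip u_ip c1 c2 t ->
      exists e, QP1_constraints phi delta k1 umin umax x_i v_i x_ip v_ip u_ip c1 c2 t (u_i t) e) :
  forall k : nat,
    t0 <= t0 + INR k * dt -> t0 + INR (S k) * dt <= tm ->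
    QP1_feasible phi delta k1 umin umax x_i v_i x_ip v_ip u_ip c1 c2 (t0 + INR k * dt).

Proof.
  assert (Hfeas : forall t, 0 <= bF phi delta k1 umin x_i v_i x_ip v_ip t ->
             0 <= b_eta1 phi umin v_i v_ip t ->
             QP1_feasible phi delta k1 umin umax x_i v_i x_ip v_ip u_ip c1 c2 t).
  { intros t H1 H2. exists umin, (c1 t + c2 t * umin).
    unfold QP1_constraints, bcbf1, eta1; unfold bF in H1.
    specialize (HA1 t). repeat split; try lra; nra. }
  assert (Hinv : forall k : nat,
     0 <= bF phi delta k1 umin x_i v_i x_ip v_ip (t0 + INR k * dt) /\
     0 <= b_eta1 phi umin v_i v_ip (t0 + INR k * dt)).
  { induction k as [|k [IH1 IH2]].
    - simpl. replace (t0 + 0 * dt) with t0 by ring. auto.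
    - set (t := t0 + INR k * dt) in *.
      destruct (Hctrl k (Hfeas _ IH1 IH2)) as [e [C1 [C2 [C3 C4]]]].
      fold t in C1, C2, C3, C4.
      replace (t0 + INR (S k) * dt) with (t + dt) by (unfold t; rewrite S_INR; ring).
      assert (Dbe : right_deriv (b_eta1 phi umin v_i v_ip) t (u_ip t + (-1) * u_i t + 0)).
      { apply (rd_ext (fun s => v_ip s + (-1) * v_i s + (- phi*umin))). 2: apply rd_plus; [apply rd_plus; [apply Hdv_ip | apply rd_scal, Hdv_i] | apply rd_const].
        intros s; unfold b_eta1; simpl; ring. }
      assert (DbF : right_deriv (bF phi delta k1 umin x_i v_i x_ip v_ip) t
         (u_ip t + (-1) * u_i t + k1 * (v_ip t + (-1) * v_i t + (-phi) * u_i t + 0) + 0)).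
      { apply (rd_ext (fun s => v_ip s + (-1) * v_i s + k1 * (x_ip s + (-1) * x_i s + (-phi) * v_i s + (-delta)) + (-phi*umin))).
        2: { apply rd_plus; [apply rd_plus; [apply rd_plus; [apply Hdv_ip | apply rd_scal, Hdv_i] | apply rd_scal] | apply rd_const].
             apply rd_plus; [apply rd_plus; [apply rd_plus; [apply Hdx_ip | apply rd_scal, Hdx_i] | apply rd_scal, Hdv_i] | apply rd_const]. }
        intros s; unfold bF, b1; simpl. idtac. ring. }
      unfold bcbf1, eta1 in *. unfold bF in IH1. unfold b_eta1 in IH2.
      split.
      + apply (HSA_bF k _ DbF IH1). unfold bF, b_eta1 in *. pose proof (Rmult_le_pos _ _ (Rlt_le _ _ Hk1) C1). fold t. nra.
      + apply (HSA_beta k _ Dbe IH2). unfold b_eta1 in *. fold t. lra. }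
  intros k _ _. destruct (Hinv k); auto.
Qed.
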